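(* Let $G$ be a finitely generated group which is not nilpotent. Then there exists $a\in G$ such that the normal subgroup of $G$ generated by $a$ is not nilpotent. *)

(* Defs.v *)
From Stdlib Require Import List.

Record Group := {
  carrier :> Type;
  gmul : carrier -> carrier -> carrier;
  gone : carrier;
  ginv : carrier -> carrier;
  gmulA : forall x y z, gmul x (gmul y z) = gmul (gmul x y) z;
  gmul1g : forall x, gmul gone x = x;
  gmulVg : forall x, gmul (ginv x) x = gone
}.

Arguments gmul {g}.
Arguments gone {g}.
Arguments ginv {g}.

Definition is_subgroup {G : Group} (H : G -> Prop) : Prop :=
  H gone /\ (forall x y, H x -> H y -> H (gmul x y)) /\ (forall x, H x -> H (ginv x)).

Definition generated {G : Group} (S : G -> Prop) : G -> Prop :=
  fun x => forall H, is_subgroup H -> (forall y, S y -> H y) -> H x.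

Definition finitely_generated (G : Group) : Prop :=
  exists l : list G, forall x : G, generated (fun y => In y l) x.

Definition is_normal {G : Group} (N : G -> Prop) : Prop :=
  is_subgroup N /\ forall g x, N x -> N (gmul (gmul g x) (ginv g)).

Definition normal_closure {G : Group} (a : G) : G -> Prop :=
  fun x => forall N, is_normal N -> N a -> N x.

Definition comm {G : Group} (x y : G) : G :=
  gmul (gmul (gmul (ginv x) (ginv y)) x) y.

Fixpoint lower_central {G : Group} (H : G -> Prop) (n : nat) : G -> Prop :=
  match n with
  | O => H
  | S n => generated (fun z => exists x y, lower_central H n x /\ H y /\ z = comm x y)
  end.

Definition nilpotent_subgroup {G : Group} (H : G -> Prop) : Prop :=
  exists n, forall x, lower_central H n x -> x = gone.

Definition nilpotent_group (G : Group) : Prop :=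
  nilpotent_subgroup (fun _ : G => True).

(* Main.v *)
Require Import Defs.
From Stdlib Require Import List.
From Stdlib Require Import Classical Lia PeanoNat.
Arguments gmulA {g}.
Arguments gmul1g {g}.
Arguments gmulVg {g}.

Lemma gmulA' {G:Group} (x y z : G) : gmul (gmul x y) z = gmul x (gmul y z).
Proof. symmetry; apply gmulA. Qed.

Lemma gmulgV {G:Group} (x:G) : gmul x (ginv x) = gone.
Proof.
  rewrite <- (gmul1g (gmul x (ginv x))).
  rewrite <- (gmulVg (ginv x)) at 1.
  rewrite <- gmulA. rewrite (gmulA (ginv x) x (ginv x)). rewrite gmulVg, gmul1g. apply gmulVg.
Qed.

Lemma gmulg1 {G:Group} (x:G) : gmul x gone = x.
Proof. rewrite <- (gmulVg x), gmulA, gmulgV, gmul1g. reflexivity. Qed.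

Lemma ginvK {G:Group} (x:G) : ginv (ginv x) = x.
Proof. rewrite <- (gmulg1 (ginv (ginv x))), <- (gmulVg x), gmulA, gmulVg, gmul1g. reflexivity. Qed.

Lemma ginv_uniq {G:Group} (a b:G) : gmul a b = gone -> ginv a = b.
Proof. intro H. rewrite <- (gmulg1 (ginv a)), <- H, gmulA, gmulVg, gmul1g. reflexivity. Qed.

Lemma gmulKV {G:Group} (x y : G) : gmul (ginv x) (gmul x y) = y.
Proof. rewrite gmulA, gmulVg, gmul1g. reflexivity. Qed.

Lemma gmulVK {G:Group} (x y : G) : gmul x (gmul (ginv x) y) = y.
Proof. rewrite gmulA, gmulgV, gmul1g. reflexivity. Qed.

Lemma ginvM {G:Group} (x y : G) : ginv (gmul x y) = gmul (ginv y) (ginv x).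
Proof. apply ginv_uniq. rewrite !gmulA', gmulVK, gmulgV. reflexivity. Qed.

Lemma ginv1 {G:Group} : ginv (@gone G) = gone.
Proof. apply ginv_uniq. apply gmul1g. Qed.

Global Hint Rewrite @gmulA' @gmul1g @gmulg1 @gmulVg @gmulgV @gmulKV @gmulVK @ginvK @ginvM @ginv1 : grp.

Ltac gsimpl := unfold comm; autorewrite with grp; try reflexivity.

Lemma generated_sub {G:Group} (S H : G -> Prop) :
  is_subgroup H -> (forall y, S y -> H y) -> forall x, generated S x -> H x.
Proof. intros HH HS x Hx. apply Hx; auto. Qed.

Lemma generated_subgroup {G:Group} (S : G -> Prop) : is_subgroup (generated S).
Proof.
  split; [|split].
  - intros H [H1 _] _. exact H1.
  - intros x y Hx Hy H HH HS. destruct HH as (H1 & H2 & H3). apply H2.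
    apply Hx; [split; auto|auto]. apply Hy; [split; auto|auto].
  - intros x Hx H HH HS. destruct HH as (H1 & H2 & H3). apply H3.
    apply Hx; [split; auto|auto].
Qed.

Lemma generated_incl {G:Group} (S : G -> Prop) y : S y -> generated S y.
Proof. intros Hy H _ HS. auto. Qed.

Lemma generated_ext {G:Group} (S S' : G -> Prop) :
  (forall z, S z <-> S' z) -> forall x, generated S x -> generated S' x.
Proof. intros E x Hx K HK HS. apply Hx; auto. intros y Hy; apply HS, E, Hy. Qed.

Lemma generated_normal {G:Group} (S : G -> Prop) :
  (forall g y, S y -> S (gmul (gmul g y) (ginv g))) -> is_normal (generated S).
Proof.
  intros HS. split; [apply generated_subgroup|].
  intros g x Hx.
  pose proof (generated_subgroup S) as (G1 & G2 & G3).
  apply (generated_sub S (fun z => generated S (gmul (gmul g z) (ginv g)))); auto.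
  - split; [|split].
    + rewrite gmulg1, gmulgV. auto.
    + intros a b Ha Hb.
      replace (gmul (gmul g (gmul a b)) (ginv g)) with
        (gmul (gmul (gmul g a) (ginv g)) (gmul (gmul g b) (ginv g))) by gsimpl.
      auto.
    + intros a Ha.
      replace (gmul (gmul g (ginv a)) (ginv g)) with
        (ginv (gmul (gmul g a) (ginv g))) by gsimpl.
      auto.
  - intros y Hy. apply generated_incl. auto.
Qed.

Lemma normal_conj {G:Group} (N : G -> Prop) g x :
  is_normal N -> N x -> N (gmul (gmul g x) (ginv g)).
Proof. intros [_ HN] Hx. auto. Qed.

Lemma trivial_normal {G:Group} : is_normal (fun x : G => x = gone).
Proof.
  split; [split; [|split]|].
  - reflexivity.
  - intros x y -> ->. apply gmul1g.
  - intros x ->. apply ginv1.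
  - intros g x ->. gsimpl.
Qed.

Lemma true_normal {G:Group} : is_normal (fun _ : G => True).
Proof. repeat split; auto. Qed.

Lemma comm_conj {G:Group} (g x y : G) :
  gmul (gmul g (comm x y)) (ginv g) =
  comm (gmul (gmul g x) (ginv g)) (gmul (gmul g y) (ginv g)).
Proof. gsimpl. Qed.

Lemma lc_normal {G:Group} (M : G -> Prop) : is_normal M -> forall i, is_normal (lower_central M i).
Proof.
  intros HM i. induction i as [|i IH]; [exact HM|].
  cbn [lower_central]. apply generated_normal.
  intros g z (x & y & Hx & Hy & ->).
  exists (gmul (gmul g x) (ginv g)), (gmul (gmul g y) (ginv g)).
  split; [apply normal_conj; auto|split; [apply normal_conj; auto|apply comm_conj]].
Qed.

Definition Gam {G:Group} (M : G -> Prop) (i : nat) : G -> Prop :=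
  match i with O => fun _ => True | S j => lower_central M j end.

Lemma Gam_normal {G:Group} (M : G -> Prop) : is_normal M -> forall i, is_normal (Gam M i).
Proof. intros HM [|i]; [apply true_normal|apply lc_normal; auto]. Qed.

Lemma comm_stable {G:Group} (K : G -> Prop) x m : is_normal K -> K x -> K (comm x m).
Proof.
  intros HK Hx. pose proof HK as [(K1 & K2 & K3) _].
  replace (comm x m) with (gmul (ginv x) (gmul (gmul (ginv m) x) (ginv (ginv m)))) by gsimpl.
  apply K2; auto. apply normal_conj; auto.
Qed.

Lemma Gam_step {G:Group} (M : G -> Prop) i x m :
  is_normal M -> Gam M i x -> M m -> Gam M (S i) (comm x m).
Proof.
  intros HM Hx Hm. destruct i as [|j].
  - simpl. pose proof HM as [(K1 & K2 & K3) _].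
    replace (comm x m) with (gmul (gmul (gmul (ginv x) (ginv m)) (ginv (ginv x))) m) by gsimpl.
    apply K2; auto. apply normal_conj; auto.
  - simpl. apply generated_incl. exists x, m. auto.
Qed.

Lemma Gam_mono1 {G:Group} (M : G -> Prop) i x : is_normal M -> Gam M (S i) x -> Gam M i x.
Proof.
  intros HM Hx. destruct i as [|j]; [exact I|].
  simpl in *. pose proof (lc_normal M HM j) as HN.
  revert x Hx. apply generated_sub. { destruct HN; auto. }
  intros z (a & b & Ha & Hb & ->). apply comm_stable; auto.
Qed.

Lemma Gam_mono {G:Group} (M : G -> Prop) a b x : is_normal M -> a <= b -> Gam M b x -> Gam M a x.
Proof.
  intros HM Hab. induction Hab; auto.
  intros Hx. apply IHHab. apply Gam_mono1; auto.
Qed.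

Definition FS {G:Group} (M N : G -> Prop) (r : nat) : G -> Prop :=
  generated (fun z => exists a b, S r <= a + b /\ Gam M a z /\ Gam N b z).

Lemma FS_subgroup {G:Group} (M N : G -> Prop) r : is_subgroup (FS M N r).
Proof. apply generated_subgroup. Qed.

Lemma FS_normal {G:Group} (M N : G -> Prop) r : is_normal M -> is_normal N -> is_normal (FS M N r).
Proof.
  intros HM HN. apply generated_normal. intros g y (a & b & Hab & Ha & Hb).
  exists a, b. split; auto. split; apply normal_conj; auto; apply Gam_normal; auto.
Qed.

Lemma FS_swap {G:Group} (M N : G -> Prop) r x : FS M N r x -> FS N M r x.
Proof.
  apply generated_ext. intros z; split; intros (a & b & H1 & H2 & H3);
  exists b, a; repeat split; auto; lia.
Qed.

Lemma K1 {G:Group} (M N : G -> Prop) r x m :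
  is_normal M -> is_normal N -> FS M N r x -> M m -> FS M N (S r) (comm x m).
Proof.
  intros HM HN Hx Hm. revert m Hm. revert x Hx.
  pose proof (FS_normal M N (S r) HM HN) as HF.
  pose proof HF as [(F1 & F2 & F3) _].
  apply (generated_sub _ (fun x => forall m, M m -> FS M N (S r) (comm x m))).
  - split; [|split].
    + intros m _. replace (comm gone m) with (@gone G) by gsimpl. auto.
    + intros x y Hx Hy m Hm.
      replace (comm (gmul x y) m) with
        (gmul (gmul (gmul (ginv y) (comm x m)) (ginv (ginv y))) (comm y m)) by gsimpl.
      apply F2; auto. apply normal_conj; auto.
    + intros x Hx m Hm.
      replace (comm (ginv x) m) with (gmul (gmul x (ginv (comm x m))) (ginv x)) by gsimpl.
      apply normal_conj; auto.
  - intros z (a & b & Hab & Ha & Hb) m Hm. apply generated_incl.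
    exists (S a), b. split; [lia|split].
    + apply Gam_step; auto.
    + apply comm_stable; auto. apply Gam_normal; auto.
Qed.

Definition prodset {G:Group} (M N : G -> Prop) : G -> Prop :=
  fun x => exists m n, M m /\ N n /\ x = gmul m n.

Lemma K3 {G:Group} (M N : G -> Prop) r x y :
  is_normal M -> is_normal N -> FS M N r x -> prodset M N y -> FS M N (S r) (comm x y).
Proof.
  intros HM HN Hx (m & n & Hm & Hn & ->).
  pose proof (FS_normal M N (S r) HM HN) as HF.
  pose proof HF as [(F1 & F2 & F3) _].
  replace (comm x (gmul m n)) with
    (gmul (comm x n) (gmul (gmul (ginv n) (comm x m)) (ginv (ginv n)))) by gsimpl.
  apply F2.
  - apply FS_swap. apply K1; auto. apply FS_swap; auto.
  - apply normal_conj; auto. apply K1; auto.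
Qed.

Lemma fitting {G:Group} (M N H : G -> Prop) c d :
  is_normal M -> is_normal N -> (forall y, H y -> prodset M N y) ->
  (forall x, lower_central M c x -> x = gone) ->
  (forall x, lower_central N d x -> x = gone) ->
  forall x, lower_central H (c + d + 1) x -> x = gone.
Proof.
  intros HM HN HH Hc Hd.
  assert (Hr : forall r x, lower_central H r x -> FS M N r x).
  { intros r; induction r as [|r IH]; intros x Hx.
    - destruct (HH x Hx) as (m & n & Hm & Hn & ->).
      apply (FS_subgroup M N 0).
      + apply generated_incl. exists 1, 0. simpl. auto.
      + apply generated_incl. exists 0, 1. simpl. auto.
    - cbn [lower_central] in Hx. revert x Hx. apply generated_sub.
      + apply FS_subgroup.
      + intros z (x & y & Hx & Hy & ->). apply K3; auto. }
  intros x Hx. apply Hr in Hx. revert x Hx.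
  apply generated_sub. { apply trivial_normal. }
  intros z (a & b & Hab & Ha & Hb).
  destruct (Nat.le_gt_cases (S c) a) as [Ha'|Ha'].
  - apply Hc. apply (Gam_mono M (S c) a z HM Ha' Ha).
  - apply Hd. assert (S d <= b) by lia. apply (Gam_mono N (S d) b z HN H0 Hb).
Qed.

Definition NC {G:Group} (l : list G) : G -> Prop :=
  fun x => forall N, is_normal N -> (forall y, In y l -> N y) -> N x.

Lemma NC_normal {G:Group} (l : list G) : is_normal (NC l).
Proof.
  split; [split; [|split]|].
  - intros N [[H1 _] _] _. auto.
  - intros x y Hx Hy N HN Hl. pose proof HN as [(H1 & H2 & H3) _]. apply H2; [apply Hx|apply Hy]; auto.
  - intros x Hx N HN Hl. pose proof HN as [(H1 & H2 & H3) _]. apply H3; apply Hx; auto.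
  - intros g x Hx N HN Hl. apply normal_conj; [|apply Hx]; auto.
Qed.

Lemma nc_normal {G:Group} (a : G) : is_normal (normal_closure a).
Proof.
  split; [split; [|split]|].
  - intros N [[H1 _] _] _. auto.
  - intros x y Hx Hy N HN Hl. pose proof HN as [(H1 & H2 & H3) _]. apply H2; [apply Hx|apply Hy]; auto.
  - intros x Hx N HN Hl. pose proof HN as [(H1 & H2 & H3) _]. apply H3; apply Hx; auto.
  - intros g x Hx N HN Hl. apply normal_conj; [|apply Hx]; auto.
Qed.

Lemma prodset_normal {G:Group} (M N : G -> Prop) :
  is_normal M -> is_normal N -> is_normal (prodset M N).
Proof.
  intros HM HN. pose proof HM as [(M1 & M2 & M3) _]. pose proof HN as [(N1 & N2 & N3) _].
  split; [split; [|split]|].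
  - exists gone, gone. rewrite gmul1g. auto.
  - intros x y (m & n & Hm & Hn & ->) (m' & n' & Hm' & Hn' & ->).
    exists (gmul m (gmul (gmul n m') (ginv n))), (gmul n n').
    split; [apply M2; auto; apply normal_conj; auto|split; [auto|gsimpl]].
  - intros x (m & n & Hm & Hn & ->).
    exists (gmul (gmul (ginv n) (ginv m)) (ginv (ginv n))), (ginv n).
    split; [apply normal_conj; auto|split; [auto|gsimpl]].
  - intros g x (m & n & Hm & Hn & ->).
    exists (gmul (gmul g m) (ginv g)), (gmul (gmul g n) (ginv g)).
    split; [apply normal_conj; auto|split; [apply normal_conj; auto|gsimpl]].
Qed.

Lemma lc_ext {G:Group} (H H' : G -> Prop) :
  (forall x, H x <-> H' x) -> forall n x, lower_central H n x -> lower_central H' n x.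
Proof.
  intros E n. induction n as [|n IH]; intros x Hx.
  - apply E; auto.
  - cbn [lower_central] in *. revert x Hx. apply generated_ext.
Abort.

Lemma lc_ext {G:Group} (H H' : G -> Prop) :
  (forall x, H x <-> H' x) -> forall n x, lower_central H n x <-> lower_central H' n x.
Proof.
  intros E n. induction n as [|n IH]; intros x.
  - apply E.
  - cbn [lower_central]. split; apply generated_ext; intros z; split;
    intros (a & b & Ha & Hb & ->); exists a, b; repeat split;
    try apply IH; try apply E; auto.
Qed.

Theorem mainTheorem10 (G : Group) :
  finitely_generated G -> ~ nilpotent_group G ->
  exists a : G, ~ nilpotent_subgroup (normal_closure a).
Proof.
  intros [l Hl] Hnot. apply NNPP; intro Hno.
  assert (Hall : forall a : G, nilpotent_subgroup (normal_closure a)).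
  { intro a. apply NNPP; intro Hn. apply Hno. exists a; auto. }
  assert (Hnc : forall l : list G, nilpotent_subgroup (NC l)).
  { intros l0. induction l0 as [|a l0 IH].
    - exists 0. intros x Hx. apply Hx. apply trivial_normal. intros y [].
    - destruct (Hall a) as [c Hc]. destruct IH as [d Hd].
      exists (c + d + 1). apply (fitting (normal_closure a) (NC l0)); auto.
      + apply nc_normal.
      + apply NC_normal.
      + intros y Hy. apply Hy. apply prodset_normal; [apply nc_normal|apply NC_normal].
        intros z [<- | Hz].
        * exists a, gone. split; [intros N _ HN; auto|split].
          -- destruct (NC_normal l0) as [[? _] _]; auto.
          -- rewrite gmulg1; auto.
        * exists gone, z. split; [destruct (nc_normal a) as [[? _] _]; auto|split].
          -- intros N _ HN; auto.
          -- rewrite gmul1g; auto. }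
  apply Hnot. destruct (Hnc l) as [n Hn]. exists n. intros x Hx. apply Hn.
  apply (lc_ext (fun _ => True)); auto.
  intros y; split; auto. intros _.
  apply (generated_sub (fun y => In y l) (NC l)); [destruct (NC_normal l); auto| |apply Hl].
  intros z Hz N _ HN. auto.
Qed.
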